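(* Let $X$ be a compact Hausdorff space and $\phi_1,\dots,\phi_m$ real-valued continuous functions on $X$, and let $\mathcal C(X,1,\boldsymbol\phi)$ be the set of positive scalar Borel measures $\mu$ on $X$ with $\mu(X)=1$ and $\int_X\phi_i\,d\mu=0$ for $i=1,\dots,m$. Then $\mathcal C(X,1,\boldsymbol\phi)\neq\emptyset$ if and only if for some natural number $n$ with $1\le n\le m+1$ there exist $n$ distinct points $x_1,\dots,x_n\in X$ such that $0\in\mathbb R^m$ is an interior point of the convex hull of $\{\boldsymbol\phi(x_1),\dots,\boldsymbol\phi(x_n)\}$, where $\boldsymbol\phi(x_j)=(\phi_1(x_j),\dots,\phi_m(x_j))^T$.
   Context: A vector $v$ is an interior point of the convex hull of $\{u_1,\dots,u_n\}\subset\mathbb R^m$ if $v=\sum_j\lambda_ju_j$ with $\lambda_j>0$, $\sum_j\lambda_j=1$, and the coefficients $\lambda_1,\dots,\lambda_n$ are uniquely determined by these conditions. *)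

(* Defs.v *)
From HB Require Import structures.
From mathcomp Require Import all_boot all_order all_algebra.
From mathcomp Require Import all_classical all_reals all_analysis.
Set Implicit Arguments. Unset Strict Implicit. Unset Printing Implicit Defensive.
Import Order.TTheory GRing.Theory Num.Theory.
Local Open Scope classical_set_scope.
Local Open Scope ring_scope.

Notation borelType X := (g_sigma_algebraType (@open X)).

Definition moment_set (R : realType) (X : ptopologicalType) (m : nat)
    (phi : 'I_m -> X -> R) : set {measure set (borelType X) -> \bar R} :=
  [set mu : {measure set (borelType X) -> \bar R} | mu setT = 1%E /\
    forall i : 'I_m, (\int[mu]_(x in [set: borelType X]) (phi i (x : X))%:E = 0)%E].

(* v is an interior point of the convex hull of {u_1,...,u_n} (vectors of R^m
   represented as functions 'I_m -> R): v = \sum_j lam_j u_j with lam_j > 0,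
   \sum_j lam_j = 1, and such lam is uniquely determined by these conditions. *)
Definition convex_coeffs (R : realFieldType) (m n : nat)
    (u : 'I_n -> 'I_m -> R) (v : 'I_m -> R) (lam : 'I_n -> R) : Prop :=
  (forall j, 0 < lam j) /\ \sum_(j < n) lam j = 1 /\
  (forall i, v i = \sum_(j < n) lam j * u j i).

Definition interior_point_convex_hull (R : realFieldType) (m n : nat)
    (u : 'I_n -> 'I_m -> R) (v : 'I_m -> R) : Prop :=
  exists lam, convex_coeffs u v lam /\
    forall lam', convex_coeffs u v lam' -> lam' = lam.

(* Main.v *)
Require Import Defs.
From HB Require Import structures.
From mathcomp Require Import all_boot all_order all_algebra.
From mathcomp Require Import all_classical all_reals all_analysis.
From mathcomp Require Import measurable_realfun.
From mathcomp Require Import zify ring lra.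
From Stdlib Require Import Lia Classical FunctionalExtensionality.
Import Order.TTheory GRing.Theory Num.Theory numFieldNormedType.Exports.
Local Open Scope ring_scope.

Section AlgS.
Local Set Implicit Arguments. Local Unset Strict Implicit.
Variable R : realFieldType.

Lemma move_lemma n (w d : 'I_n -> R) : (forall j, 0 < w j) -> (exists j, 0 < d j) ->
  exists t, 0 < t /\ (forall j, 0 <= w j - t * d j) /\ exists j, w j - t * d j = 0.
Proof.
move=> wpos [j0 dj0].
case: (@arg_minP _ _ _ j0 (fun j => 0 < d j) (fun j => w j / d j) dj0) => j dj jmin.
exists (w j / d j); split; first by rewrite divr_gt0.
split; last by exists j; rewrite mulfVK ?subrr // gt_eqF.
move=> k; have [dk|dk] := ltP 0 (d k).
  by have := jmin k dk; rewrite subr_ge0 ler_pdivlMr.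
rewrite subr_ge0; apply: (le_trans _ (ltW (wpos k))).
by rewrite mulr_ge0_le0 // ltW // divr_gt0.
Qed.
End AlgS.

Section AlgR.
Local Set Implicit Arguments. Local Unset Strict Implicit.
Variable R : realFieldType.

Lemma sum_support n (w g : 'I_n -> R) : (forall j, w j = 0 -> g j = 0) ->
  \sum_j g j = \sum_(i < #|[set j | w j != 0]|) g (enum_val i).
Proof.
move=> H; rewrite -(big_enum_val g) [RHS]big_mkcond /=; apply: eq_bigr => j _.
by rewrite inE; case: eqP => // /H ->.
Qed.

Lemma restrict T m (f : T -> 'I_m -> R) (v : 'I_m -> R) n (x : 'I_n -> T) (w : 'I_n -> R) :
  (forall j, 0 <= w j) -> \sum_j w j = 1 -> (forall i, v i = \sum_j w j * f (x j) i) ->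
  exists k (x' : 'I_k -> T) (w' : 'I_k -> R),
   [/\ (k <= n)%N, ((exists j, w j = 0) -> (k < n)%N), (forall j, 0 < w' j),
       \sum_j w' j = 1 & forall i, v i = \sum_j w' j * f (x' j) i].
Proof.
move=> w0 w1 wv; set S := [set j | w j != 0].
exists #|S|, (fun i => x (enum_val i)), (fun i => w (enum_val i)); split.
- by rewrite -[X in (_ <= X)%N]card_ord max_card.
- move=> [j wj]; rewrite -[X in (_ < X)%N]card_ord -(cardsC S).
  suff : (0 < #|~: S|)%N by lia.
  by apply/card_gt0P; exists j; rewrite !inE wj eqxx.
- move=> i; have := enum_valP i; rewrite inE lt_def => ->; exact: w0.
- by rewrite -(sum_support (g:=w)).
- by move=> i; rewrite wv (sum_support (w:=w)) // => j ->; rewrite mul0r.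
Qed.

Lemma kernel_lemma m n (a : 'I_n -> 'I_m -> R) : (m.+1 < n)%N ->
  exists d : 'I_n -> R, (exists j, d j != 0) /\ \sum_j d j = 0 /\
     forall i, \sum_j d j * a j i = 0.
Proof.
move=> hn.
pose A : 'M[R]_(n, m.+1) := \matrix_(j, c) (if unlift ord0 c is Some i then a j i else 1).
have : kermx A != 0.
  rewrite -mxrank_eq0 mxrank_ker; have := rank_leq_col A; lia.
have K := mulmx_ker A; move: (kermx A) K => M K.
case/matrix0Pn => r [c rc].
exists (fun j => M r j); split; first by exists c.
have Kc c' : \sum_j M r j * A j c' = 0.
  by have := congr1 (fun M : 'M[R]_(n, m.+1) => M r c') K; rewrite !mxE.
split.
  by have := Kc ord0; under eq_bigr do rewrite mxE unlift_none mulr1.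
move=> i; have := Kc (lift ord0 i).
by under eq_bigr do rewrite mxE liftK.
Qed.

Lemma exists_pos n (d : 'I_n -> R) : \sum_j d j = 0 -> (exists j, d j != 0) ->
  exists j, 0 < d j.
Proof.
move=> d0 [j dj]; apply: NNPP => H; move: dj; apply/negP; rewrite negbK.
have H' k : 0 <= - d k.
  by rewrite oppr_ge0 leNgt; apply/negP => dk; apply: H; exists k.
have := @psumr_eq0P _ _ predT (fun k => - d k) (fun k _ => H' k).
rewrite sumrN d0 oppr0 => /(_ erefl j isT) /eqP; by rewrite oppr_eq0.
Qed.

Lemma nonunique T m (f : T -> 'I_m -> R) (v : 'I_m -> R) n (x : 'I_n -> T)
  (w d : 'I_n -> R) : convex_coeffs (fun j i => f (x j) i) v w ->
  (exists j, d j != 0) -> \sum_j d j = 0 -> (forall i, \sum_j d j * f (x j) i = 0) ->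
  exists2 lam', convex_coeffs (fun j i => f (x j) i) v lam' & lam' <> w.
Proof.
move=> [wpos [w1 wv]] dn0 d0 df.
have [j0 dj0] := exists_pos d0 dn0.
have [t [t0 [tw _]]] := move_lemma wpos (ex_intro _ j0 dj0).
exists (fun j => w j - t / 2 * d j); last first.
  move=> /(congr1 (fun g => g j0)) /eqP; rewrite subr_eq addrC -subr_eq subrr.
  by rewrite eq_sym mulf_eq0 (gt_eqF dj0) orbF mulf_eq0 (gt_eqF t0) invr_eq0 pnatr_eq0.
split; [|split].
- move=> j; have := tw j; have := wpos j.
  have -> : w j - t / 2 * d j = (w j + (w j - t * d j)) / 2.
    by field.
  by move=> a b; lra.
- by rewrite sumrB w1 -mulr_sumr d0 mulr0 subr0.
- move=> i; rewrite wv /=; under [RHS]eq_bigr do rewrite mulrBl.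
  by rewrite sumrB; under [X in _ - X]eq_bigr do rewrite -!mulrA; rewrite -mulr_sumr -mulr_sumr df !mulr0 subr0.
Qed.

Lemma sum_ifeq n (j : 'I_n) (g : 'I_n -> R) :
  \sum_l (if l == j then 1 else 0) * g l = g j.
Proof.
by rewrite (bigD1 j) //= eqxx mul1r big1 ?addr0 // => l /negPf ->; rewrite mul0r.
Qed.

Lemma reduce_pos T m (f : T -> 'I_m -> R) (v : 'I_m -> R) n (x : 'I_n -> T)
  (w : 'I_n -> R) : (forall j, 0 < w j) -> \sum_j w j = 1 ->
  (forall i, v i = \sum_j w j * f (x j) i) ->
  exists n' (x' : 'I_n' -> T), [/\ (1 <= n' <= m.+1)%N, injective x' &
     interior_point_convex_hull (fun j i => f (x' j) i) v].
Proof.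
elim/ltn_ind: n x w => n IH x w wpos w1 wv.
have cw : convex_coeffs (fun j i => f (x j) i) v w by [].
have [uniq|nuniq] := classic (forall lam', convex_coeffs (fun j i => f (x j) i) v lam' -> lam' = w).
  exists n, x; split; last by exists w.
  - apply/andP; split.
      rewrite lt0n; apply/negP => /eqP n0; subst n.
      by move: w1; rewrite big_ord0 => /eqP; rewrite eq_sym oner_eq0.
    rewrite leqNgt; apply/negP => /(kernel_lemma (fun j i => f (x j) i)).
    move=> [d [dn0 [d0 df]]].
    by have [lam' /uniq ? []] := nonunique cw dn0 d0 df.
  - move=> j k xjk; apply: NNPP => jk.
    pose d l : R := (if l == j then 1 else 0) - (if l == k then 1 else 0).
    have dn0 : exists j0, d j0 != 0.
      by exists j; rewrite /d eqxx (_ : (j == k) = false) ?subr0 ?oner_eq0 //; exact/eqP.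
    have d0 : \sum_l d l = 0.
      rewrite sumrB; have := sum_ifeq j (fun _ => 1); have := sum_ifeq k (fun _ => 1).
      under eq_bigr do rewrite mulr1; move=> ->; under eq_bigr do rewrite mulr1.
      by move=> ->; rewrite subrr.
    have df i : \sum_l d l * f (x l) i = 0.
      under eq_bigr do rewrite mulrBl.
      by rewrite sumrB !sum_ifeq xjk subrr.
    by have [lam' /uniq ? []] := @nonunique T m f v n x w d cw dn0 d0 df.
apply: NNPP => Hn; apply: nuniq => lam' clam'; apply: NNPP => hne.
have [c1 [c2 c3]] := clam'.
pose d l := w l - lam' l.
have dn0 : exists j, d j != 0.
  apply: NNPP => H; apply: hne; apply: functional_extensionality => j.
  apply/eqP; rewrite eq_sym -subr_eq0; apply: NNPP => H'; apply: H; exists j.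
  exact/negP.
have d0 : \sum_j d j = 0 by rewrite sumrB w1 c2 subrr.
have df i : \sum_j d j * f (x j) i = 0.
  under eq_bigr do rewrite mulrBl.
  by rewrite sumrB -wv -c3 subrr.
have [j0 dj0] := exists_pos d0 dn0.
have [t [t0 [tw [jz jzE]]]] := move_lemma wpos (ex_intro _ j0 dj0).
have s1 : \sum_j (w j - t * d j) = 1 by rewrite sumrB w1 -mulr_sumr d0 mulr0 subr0.
have s2 i : v i = \sum_j (w j - t * d j) * f (x j) i.
  under eq_bigr do rewrite mulrBl.
  rewrite sumrB; under [X in _ - X]eq_bigr do rewrite -mulrA.
  by rewrite -mulr_sumr df mulr0 subr0 wv.
have [k [x' [w' [kn kn' w'pos w'1 w'v]]]] :=
  restrict (f:=f) (x:=x) (w:=fun j => w j - t * d j) tw s1 s2.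
apply: Hn; exact: (IH k (kn' (ex_intro _ jz jzE)) x' w' w'pos w'1 w'v).
Qed.


Lemma reduce T m (f : T -> 'I_m -> R) (v : 'I_m -> R) n (x : 'I_n -> T)
  (w : 'I_n -> R) : (forall j, 0 <= w j) -> \sum_j w j = 1 ->
  (forall i, v i = \sum_j w j * f (x j) i) ->
  exists n' (x' : 'I_n' -> T), [/\ (1 <= n' <= m.+1)%N, injective x' &
     interior_point_convex_hull (fun j i => f (x' j) i) v].
Proof.
move=> w0 w1 wv.
have [k [x' [w' [_ _ w'pos w'1 w'v]]]] := restrict w0 w1 wv.
exact: reduce_pos w'pos w'1 w'v.
Qed.

Lemma pad T N n (x' : 'I_n -> T) (l' : 'I_n -> R) (x0 : T) : (n <= N)%N ->
  (forall j, 0 <= l' j) ->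
  exists (xs : 'I_N -> T) (ls : 'I_N -> R), (forall j, 0 <= ls j) /\
    forall g : T -> R, \sum_j ls j * g (xs j) = \sum_j l' j * g (x' j).
Proof.
move=> nN l0.
exists (fun j => if insub (val j) is Some k then x' k else x0).
exists (fun j => if insub (val j) is Some k then l' k else 0); split.
  by move=> j; case: insub.
move=> g.
pose G k := if insub k is Some k' then l' k' * g (x' k') else 0.
have -> : \sum_(j < N) (if insub (val j) is Some k then l' k else 0) *
    g (if insub (val j) is Some k then x' k else x0) = \sum_(j < N) G j.
  by apply: eq_bigr => j _; rewrite /G; case: insub => // ; rewrite mul0r.
rewrite [RHS](_ : _ = \sum_(j < n) G j); last first.
  by apply: eq_bigr => j _; rewrite /G valK.
rewrite (big_ord_widen _ _ nN) [RHS]big_mkcond /=; apply: eq_bigr => j _.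
by case: ifP => // /negbT jn; rewrite /G insubN.
Qed.

Lemma sq_expand m (p s : 'I_m -> R) t :
  \sum_i (p i + t * (s i - p i)) ^+ 2 =
  \sum_i p i ^+ 2 + 2 * t * (\sum_i p i * (s i - p i)) + t ^+ 2 * \sum_i (s i - p i) ^+ 2.
Proof.
rewrite !mulr_sumr -!big_split /=; apply: eq_bigr => i _; ring.
Qed.

Lemma variational T m (phi : 'I_m -> T -> R) (xs : 'I_m.+1 -> T) (ls : 'I_m.+1 -> R) :
 (forall j, 0 <= ls j) -> \sum_j ls j = 1 ->
 (forall (ys : 'I_m.+1 -> T) (ks : 'I_m.+1 -> R), (forall j, 0 <= ks j) -> \sum_j ks j = 1 ->
    \sum_i (\sum_j ls j * phi i (xs j)) ^+ 2 <= \sum_i (\sum_j ks j * phi i (ys j)) ^+ 2) ->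
 forall x, \sum_i (\sum_j ls j * phi i (xs j)) ^+ 2 <=
    \sum_i (\sum_j ls j * phi i (xs j)) * phi i x.
Proof.
move=> l0 l1 hmin x.
set p := fun i => \sum_j ls j * phi i (xs j).
set s := fun i => phi i x.
set a := \sum_i p i * (s i - p i).
set b := \sum_i (s i - p i) ^+ 2.
have b0 : 0 <= b by apply: sumr_ge0 => i _; exact: sqr_ge0.
suff a0 : 0 <= a.
  by move: a0; rewrite /a; under eq_bigr do rewrite mulrBr; rewrite sumrB subr_ge0 /p /s; under eq_bigr do rewrite -expr2.
rewrite leNgt; apply/negP => a0.
set t := - a / (b - a).
have ba : 0 < b - a by lra.
have t0 : 0 < t by rewrite /t divr_gt0 // oppr_gt0.
have t1 : t <= 1 by rewrite /t ler_pdivrMr // mul1r; lra.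
pose xx (j : 'I_m.+2) := if (j < m.+1)%N then xs (inord j) else x.
pose ww (j : 'I_m.+2) := if (j < m.+1)%N then (1 - t) * ls (inord j) else t.
pose q i := p i + t * (s i - p i).
have ww0 j : 0 <= ww j by rewrite /ww; case: ifP => _; [apply: mulr_ge0 => //; lra | lra].
have wE (F : 'I_m.+2 -> R) : \sum_j ww j * F j =
    (1 - t) * \sum_(j < m.+1) ls j * F (widen_ord (leqnSn _) j) + t * F ord_max.
  rewrite big_ord_recr /= /ww ltnn mulr_sumr; congr (_ + _); apply: eq_bigr => j _.
  by rewrite /= ltn_ord inord_val mulrA.
have ww1 : \sum_j ww j = 1.
  have := wE (fun _ => 1); under eq_bigr do rewrite mulr1; move=> ->.
  under eq_bigr do rewrite mulr1; rewrite l1; lra.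
have wwv i : q i = \sum_j ww j * (fun y k => phi k y) (xx j) i.
  rewrite (wE (fun j => phi i (xx j))) /xx /= ltnn /q /p /s.
  under [X in _ = _ * X + _]eq_bigr do rewrite ltn_ord inord_val.
  lra.
have [n' [x' [/andP[_ n'm] _ [lam [[lpos [lsum lv]] _]]]]] := @reduce T m (fun y k => phi k y) q _ xx ww ww0 ww1 wwv.
have [ys [ks [ks0 ksE]]] := pad x' x n'm (fun j => ltW (lpos j)).
have := hmin ys ks ks0.
have -> : \sum_j ks j = 1 by have := ksE (fun _ => 1); under eq_bigr do rewrite mulr1; move=> ->; under eq_bigr do rewrite mulr1.
move=> /(_ erefl).
have -> : \sum_i (\sum_j ks j * phi i (ys j)) ^+ 2 = \sum_i q i ^+ 2.
  by apply: eq_bigr => i _; rewrite (ksE (phi i)) lv.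
rewrite /q sq_expand -/a -/b -/p => H.
have : 0 <= t * (2 * a + t * b).
  move: H; change (\sum_i p i ^+ 2 <= \sum_i p i ^+ 2 + 2 * t * a + t ^+ 2 * b -> 0 <= t * (2 * a + t * b)); rewrite expr2; nra.
rewrite pmulr_rge0 //.
have -> : t * b = - a + t * a.
  by rewrite /t; field; lra.
nra.
Qed.
End AlgR.

Local Open Scope classical_set_scope.

Section Dsum.
Context d (T : measurableType d) (R : realType).
Variables (c : nat -> {nonneg R}) (p : nat -> T) (N : nat).
Let m_ : {measure set T -> \bar R}^nat := fun k => mscale (c k) (\d_(p k)).

Lemma dsum_setT : msum m_ N setT = (\sum_(k < N) (c k)%:num)%:E.
Proof.
rewrite /msum /m_ /= /mscale -sumEFin; apply: eq_bigr => k _.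
by rewrite -[RHS]mule1; congr (_ * _)%E; exact: diracT.
Qed.

Lemma dsum_integral (g : T -> R) : measurable_fun setT g ->
  (\int[msum m_ N]_(x in setT) (g x)%:E = (\sum_(k < N) (c k)%:num * g (p k))%:E)%E.
Proof.
move=> mg; have mf : measurable_fun [set: T] (fun x => (g x)%:E : \bar R) by exact/measurable_EFinP.
rewrite integralE.
rewrite ge0_integral_measure_sum //; last exact: measurable_funepos.
rewrite ge0_integral_measure_sum //; last exact: measurable_funeneg.
have H (h : T -> \bar R) : measurable_fun setT h -> (forall x, (0 <= h x)%E) ->
    forall k, (\int[m_ k]_x h x = ((c k)%:num)%:E * h (p k))%E.
  move=> mh h0 k; rewrite ge0_integral_mscale //; congr (_ * _)%E.
  rewrite integral_dirac //; rewrite -[RHS]mul1e; congr (_ * _)%E; exact: diracT.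
have Hp := H _ (measurable_funepos mf) (fun x => ltac:(by rewrite funeposE le_max lexx orbT)).
have Hn := H _ (measurable_funeneg mf) (fun x => ltac:(by rewrite funenegE le_max lexx orbT)).
under eq_bigr do rewrite Hp funeposE -EFin_max -EFinM.
under [X in (_ - X)%E]eq_bigr do rewrite Hn funenegE -EFinN -EFin_max -EFinM.
rewrite !sumEFin -EFinB -sumrB; congr EFin; apply: eq_bigr => k _.
rewrite -mulrBr; congr (_ * _).
by rewrite !maxEle; case: leP => h1; case: leP => h2; lra.
Qed.
End Dsum.
Lemma cont_meas (R : realType) (X : ptopologicalType) (f : X -> R) :
  continuous f -> measurable_fun [set: borelType X] (f : borelType X -> R).
Proof.
move=> /continuousP cf; apply: (measurability _ (RGenOpens.measurableE R)).
move=> _ [_ [a [b ->] <-]]; rewrite setTI; apply: sub_sigma_algebra.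
exact/cf/interval_open.
Qed.

Lemma backward (R : realType) (X : ptopologicalType) m (phi : 'I_m -> X -> R)
  (hphi : forall i, continuous (phi i)) n (x : 'I_n -> X) (lam : 'I_n -> R) :
  (1 <= n)%N -> convex_coeffs (fun j i => phi i (x j)) (fun _ => 0) lam ->
  moment_set phi !=set0.
Proof.
case: n x lam => [//|n] x lam _ [lpos [l1 lv]].
pose cR k : R := if (k < n.+1)%N then lam (inord k) else 0.
have c0 k : 0 <= cR k by rewrite /cR; case: ifP => // _; exact: ltW.
pose c k : {nonneg R} := NngNum (c0 k).
pose p k : borelType X := x (inord k).
have cE (k : 'I_n.+1) : cR k = lam k by rewrite /cR ltn_ord inord_val.
exists (msum (fun k => mscale (c k) (\d_(p k))) n.+1); split.
- apply: eq_trans (@dsum_setT _ _ _ c p n.+1) _; congr EFin; rewrite -l1; apply: eq_bigr => k _; exact: cE.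
- move=> i; have := @dsum_integral _ _ _ c p n.+1 (phi i) (@cont_meas R X _ (hphi i)). move=> ->; congr EFin.
  rewrite [RHS](lv i); apply: eq_bigr => k _ /=; rewrite cE /p inord_val //.
Qed.

Section Fwd.
Import function_spaces.ArrowAsProduct.

Lemma le1_of_sum (R : realFieldType) n (k : 'I_n -> R) : (forall j, 0 <= k j) ->
  \sum_j k j = 1 -> forall j, k j <= 1.
Proof.
move=> k0 k1 j; rewrite -k1 (bigD1 j) //= lerDl; exact: sumr_ge0.
Qed.

Lemma cont_sum (T : topologicalType) (R : realType) n (F : 'I_n -> T -> R) :
  (forall j, continuous (F j)) -> continuous (fun x => \sum_j F j x).
Proof. by move=> h; exact: (continuous_big add_continuous (fun j _ => h j)). Qed.

Lemma forward_min (R : realType) (X : ptopologicalType) (hX : compact [set: X]) m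
  (phi : 'I_m -> X -> R) (hphi : forall i, continuous (phi i)) :
 exists (xs : 'I_m.+1 -> X) (ls : 'I_m.+1 -> R), [/\ forall j, 0 <= ls j, \sum_j ls j = 1 &
   forall (ys : 'I_m.+1 -> X) (ks : 'I_m.+1 -> R), (forall j, 0 <= ks j) -> \sum_j ks j = 1 ->
     \sum_i (\sum_j ls j * phi i (xs j))^+2 <= \sum_i (\sum_j ks j * phi i (ys j))^+2].
Proof.
pose Z := forall j : 'I_m.+1, (X * R)%type.
pose A : set Z := [set z | forall j, (setT `*` `[0, 1]) (z j)].
have cA : compact A.
  apply: (@tychonoff _ (fun _ => (X * R)%type) (fun _ => setT `*` `[0, 1])) => j.
  apply: compact_setX => //; exact: segment_compact.
pose sl (z : Z) := \sum_j (z j).2.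
have csl : continuous sl.
  apply: cont_sum => j.
  move=> z; apply: (@continuous_comp _ _ _ (fun z : Z => z j) snd z); first exact: proj_continuous.
  exact: cvg_snd.
pose B := A `&` (sl @^-1` [set 1]).
have cB : compact B.
  apply: compact_closedI => //; apply: preimage_closed; first by move=> *; exact: csl.
  exact: closed_eq.
pose F (z : Z) := \sum_i (\sum_j (z j).2 * phi i (z j).1) * (\sum_j (z j).2 * phi i (z j).1).
have cF : continuous F.
  apply: cont_sum => i.
  have h : continuous (fun z : Z => \sum_j (z j).2 * phi i (z j).1).
    apply: cont_sum => j z.
    apply: (@continuousM R Z (fun z : Z => (z j).2) (fun z : Z => phi i (z j).1) z).
      apply: (@continuous_comp _ _ _ (fun z : Z => z j) snd z); first exact: proj_continuous.
      exact: cvg_snd.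
    apply: (@continuous_comp _ _ _ (fun z : Z => z j) (fun p => phi i p.1) z); first exact: proj_continuous.
    apply: (@continuous_comp _ _ _ fst (phi i) (z j)); first exact: cvg_fst.
    exact: hphi.
  move=> z; apply: (@continuousM R Z _ _ z); exact: h.
have B0 : B !=set0.
  exists (fun j => (point, if j == ord0 then 1 else 0)); split.
    by move=> j; split => //=; case: ifP => _; rewrite in_itv /= ?lexx ?ler01.
  by rewrite /sl /= (bigD1 ord0) //= big1 ?addr0 // => j /negPf ->.
have [z zB zmin] := compact_EVT_min B0 cB (continuous_subspaceT cF).
exists (fun j => (z j).1), (fun j => (z j).2).
move: zB; rewrite inE => -[zA zs]; split.
- by move=> j; have [_ /=] := zA j; rewrite in_itv /= => /andP[].
- exact: zs.
move=> ys ks ks0 ks1; apply: (zmin (fun j => (ys j, ks j))).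
rewrite inE; split => //= j; split => //=; rewrite in_itv /= ks0 /=.
exact: le1_of_sum.
Qed.
End Fwd.

Lemma forward (R : realType) (X : ptopologicalType)
  (hX : compact [set: X]) (m : nat) (phi : 'I_m -> X -> R)
  (hphi : forall i, continuous (phi i)) :
  moment_set phi !=set0 ->
  exists (n : nat) (x : 'I_n -> X),
    [/\ (1 <= n <= m.+1)%N, injective x &
        interior_point_convex_hull (fun j i => phi i (x j)) (fun _ => 0)].
Proof.
move=> [mu [mu1 mom]].
have [xs [ls [l0 l1 hmin]]] := @forward_min R X hX m phi hphi.
pose p i := \sum_j ls j * phi i (xs j).
have var := variational l0 l1 hmin.
pose g x := \sum_i p i * phi i x.
have cg : continuous g.
  apply: cont_sum => i z; apply: (@continuousM R X (fun _ => p i) (phi i) z).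
    exact: cvg_cst.
  exact: hphi.
have mg := @cont_meas R X g cg.
have intphi i : mu.-integrable [set: borelType X] (EFin \o phi i).
  apply: (@measurable_bounded_integrable _ _ R mu (phi i) setT measurableT).
  - by rewrite mu1 ltry.
  - exact: (@cont_meas R X _ (hphi i)).
  - have := compact_bounded (continuous_compact (continuous_subspaceT (hphi i)) hX).
    case=> M [Mr HM]; exists M; split => // y My x _; by apply: (HM y My); exists x.
have int0 : (\int[mu]_(x in [set: borelType X]) (g x)%:E = 0)%E.
  transitivity (\int[mu]_(x in [set: borelType X]) (\sum_i ((p i)%:E * (phi i x)%:E)))%E.
    by apply: eq_integral => x _; rewrite /g -sumEFin.
  rewrite (@integral_sum _ _ R mu setT measurableT _ (fun i x => ((p i)%:E * (phi i x)%:E)%E)).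
    rewrite big1 // => i _; rewrite (@integralZl _ _ R mu setT measurableT _ (intphi i)).
    by rewrite mom mule0.
  by move=> i; exact: (@integrableZl _ _ R mu setT measurableT (p i) _ (intphi i)).
have S0 : \sum_i p i ^+ 2 <= 0.
  suff : ((\sum_i p i ^+ 2)%:E <= 0)%E by rewrite lee_fin.
  rewrite -int0.
  have -> : ((\sum_i p i ^+ 2)%:E = \int[mu]_(x in [set: borelType X]) cst (\sum_i p i ^+ 2)%:E x)%E.
    by rewrite integral_cst // mu1 mule1.
  apply: ge0_le_integral => //.
  - by move=> x _; rewrite lee_fin; apply: sumr_ge0 => i _; exact: sqr_ge0.
  - exact/measurable_EFinP.
  - by move=> x _; rewrite lee_fin; exact: var.
have p0 i : p i = 0.
  have : \sum_i p i ^+ 2 = 0.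
    by apply/eqP; rewrite eq_le S0 /=; apply: sumr_ge0 => k _; exact: sqr_ge0.
  move/eqP; rewrite psumr_eq0; last by move=> k _; exact: sqr_ge0.
  by move=> /allP /(_ i (mem_index_enum _)) /=; rewrite sqrf_eq0 => /eqP.
have := @reduce R X m (fun y i => phi i y) (fun _ => 0) _ xs ls l0 l1.
move=> H; apply: H => i; exact: (esym (p0 i)).
Qed.

Theorem corollary3p4 (R : realType) (X : ptopologicalType)
  (hX : compact [set: X]) (hH : hausdorff_space X)
  (m : nat) (phi : 'I_m -> X -> R) (hphi : forall i, continuous (phi i)) :
  moment_set phi !=set0 <->
  exists (n : nat) (x : 'I_n -> X),
    [/\ (1 <= n <= m.+1)%N, injective x &
        interior_point_convex_hull (fun j i => phi i (x j)) (fun _ => 0)].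
Proof.
split; first exact: forward.
move=> [n [x [/andP[n1 _] _ [lam [cl _]]]]].
exact: (@backward R X m phi hphi n x lam n1 cl).
Qed.
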